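(* Let $V$ be a finite totally ordered set and let $w_1, w_2$ be derangements of $V$ each having exactly $k$ disjoint cycles. If $\theta(w_1) \le \theta(w_2)$ in the componentwise (cartesian product) order on $(\mathbb{Z}_+)^{|V|-k}$, then $f(w_1) \le f(w_2)$ and $r(w_1) \le r(w_2)$.
   Context: A derangement of $V$ is a fixed-point-free permutation of $V$. For a permutation $w$ of $V$ and $t \in V$, define $\rho_w(t) = \{t, w(t), \ldots, w^{k-1}(t)\}$, where $k$ is the smallest positive integer with $w^k(t) \le t$, and define $\lambda_w(t) = w^{-\ell}(t)$, where $\ell$ is the smallest positive integer with $w^{-\ell}(t) \le t$. Let $U(w)$ be the set of elements of $V$ that are not minimal in their $w$-cycle (so $|U(w)| = |V| - k$ if $w$ has $k$ cycles). $\theta(w) \in (\mathbb{Z}_+)^{|V|-k}$ is the tuple of the numbers $|\rho_w(t)|$ for $t \in U(w)$ (with multiplicity), listed in non-decreasing order. For a simple graph $G$ with vertex set $V$, the derangement set $\mathcal{D}(G)$ is the set of permutations $w$ of $V$ such that for every vertex $t$, $\lambda_w(t)$ is adjacent in $G$ to some vertex of $\rho_w(t)$. The frequency $f(w)$ is the number of simple graphs $G$ on vertex set $V$ with $w \in \mathcal{D}(G)$, and the rate is $r(w) = f(w)/2^{\binom{|V|}{2}}$. *)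

(* Defs.v *)
From HB Require Import structures.
From mathcomp Require Import all_boot all_order all_algebra all_fingroup.
Set Implicit Arguments. Unset Strict Implicit. Unset Printing Implicit Defensive.
Import Order.TTheory GRing.Theory Num.Theory.

(* V is modelled as a finite totally ordered type T : finOrderType d. *)
Section Defs.
Variables (d : Order.disp_t) (T : finOrderType d).

Definition derangement (w : {perm T}) : Prop := forall x : T, w x != x.

(* k(t) = smallest positive k with w^k(t) <= t (exists, as w^order(t) t = t,
   and the cycle length is at most #|T|). *)
Definition rho_len (w : {perm T}) (t : T) : nat :=
  (find (fun k => ((w ^+ k)%g t <= t)%O) (iota 1 #|T|)).+1.

Definition rho (w : {perm T}) (t : T) : {set T} :=
  [set (w ^+ (val i))%g t | i : 'I_(rho_len w t)].

Definition lambda_len (w : {perm T}) (t : T) : nat :=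
  (find (fun l => (((w^-1) ^+ l)%g t <= t)%O) (iota 1 #|T|)).+1.

Definition lambda (w : {perm T}) (t : T) : T :=
  (((w^-1) ^+ lambda_len w t)%g t).

Definition simple_graph (E : {set {set T}}) : bool :=
  [forall e in E, #|e| == 2].

Definition adj (E : {set {set T}}) (u v : T) : bool :=
  (u != v) && ([set u; v] \in E).

Definition inD (E : {set {set T}}) (w : {perm T}) : bool :=
  [forall t : T, [exists u in rho w t, adj E (lambda w t) u]].

Definition freq (w : {perm T}) : nat :=
  #|[set E : {set {set T}} | simple_graph E && inD E w]|.

Definition rate (w : {perm T}) : rat :=
  (freq w)%:R / (2 ^ 'C(#|T|, 2))%:R.

Definition Uset (w : {perm T}) : {set T} :=
  [set t : T | [exists x in porbit w t, (x < t)%O]].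

Definition theta (w : {perm T}) : seq nat :=
  sort leq [seq #|rho w t| | t <- enum (Uset w)].

End Defs.

Definition tuple_le (s1 s2 : seq nat) : bool := all2 leq s1 s2.

(* Main.v *)
Require Import Defs.
From mathcomp Require Import all_boot all_order all_algebra all_fingroup.
Set Implicit Arguments. Unset Strict Implicit. Unset Printing Implicit Defensive.
Import Order.TTheory.
Open Scope order_scope.

Definition flen (d : Order.disp_t) (T : finOrderType d) (s : {perm T}) (t : T) : nat :=
  (find (fun k => ((s ^+ k)%g t <= t)%O) (iota 1 #|T|)).+1.

Lemma flen_lt (d : Order.disp_t) (T : finOrderType d) (s : {perm T}) t k :
  (0 < k)%N -> (k < flen s t)%N -> t < (s ^+ k)%g t.
Proof.
move=> k0 klt.
have hk : (k.-1 < find (fun k => ((s ^+ k)%g t <= t)%O) (iota 1 #|T|))%N.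
  by rewrite -ltnS prednK.
have := before_find 0 hk.
have hs : (k.-1 < #|T|)%N.
  by apply: leq_trans hk _; have := find_size (fun k => ((s ^+ k)%g t <= t)%O) (iota 1 #|T|); rewrite size_iota.
rewrite nth_iota // add1n prednK // => /negbT.
by rewrite -ltNge.
Qed.

Lemma flen_spec (d : Order.disp_t) (T : finOrderType d) (s : {perm T}) t :
  (0 < flen s t)%N /\ (flen s t <= #|T|)%N /\ (s ^+ flen s t)%g t <= t.
Proof.
set a := (fun k => ((s ^+ k)%g t <= t)%O).
have hh : has a (iota 1 #|T|).
  apply/hasP; exists #|porbit s t|.
    rewrite mem_iota add1n ltnS max_card andbT lt0n.
    exact: card_porbit_neq0.
  by rewrite /a permX iter_porbit.
split => //; split.
  by move: hh; rewrite has_find size_iota.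
have := nth_find 0 hh; rewrite /a nth_iota; first by rewrite add1n.
by move: hh; rewrite has_find size_iota.
Qed.

Lemma periodic_bound (d : Order.disp_t) (T : finOrderType d) (s : {perm T}) u q c :
  (0 < q)%N -> (s ^+ q)%g u = u ->
  (forall i, (0 < i)%N -> (i <= q)%N -> c <= (s ^+ i)%g u) ->
  forall y, y \in porbit s u -> c <= y.
Proof.
move=> q0 hq hi.
have main : forall n, (0 < n)%N -> c <= (s ^+ n)%g u.
  elim/ltn_ind => n IH n0.
  case: (leqP n q) => hn; first exact: hi.
  have -> : n = (q + (n - q))%N by rewrite subnKC // ltnW.
  rewrite expgD permM hq; apply: IH; first by rewrite ltn_subrL q0.
  by rewrite subn_gt0.
move=> y /porbitP [j ->].
have -> : (s ^+ j)%g u = (s ^+ (q + j))%g u by rewrite expgD permM hq.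
by apply: main; rewrite addn_gt0 q0.
Qed.

Lemma notU_min (d : Order.disp_t) (T : finOrderType d) (w : {perm T}) t :
  t \notin Uset w -> forall x, x \in porbit w t -> t <= x.
Proof.
rewrite inE => /existsPn h x hx.
by have := h x; rewrite hx /= -leNgt.
Qed.

Lemma U_strict (d : Order.disp_t) (T : finOrderType d) (s : {perm T}) t :
  (exists2 x, x \in porbit s t & x < t) -> (s ^+ flen s t)%g t < t.
Proof.
move=> [x hx xt].
have [h0 [_ hle]] := flen_spec s t.
rewrite lt_neqAle hle andbT; apply/negP => /eqP he.
suff : t <= x by rewrite leNgt xt.
apply: (periodic_bound h0 he) hx.
move=> i i0 iq; rewrite le_eqVlt; case: (ltngtP i (flen s t)) iq => // [hi _|-> _].
  by rewrite flen_lt ?orbT.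
by rewrite he eqxx.
Qed.

Lemma rhoP (d : Order.disp_t) (T : finOrderType d) (w : {perm T}) t u :
  reflect (exists2 i, (i < rho_len w t)%N & u = (w ^+ i)%g t) (u \in rho w t).
Proof.
apply: (iffP imsetP) => [[i _ ->]|[i hi ->]].
  by exists (val i); first exact: ltn_ord.
by exists (Ordinal hi).
Qed.

Lemma flen1 (d : Order.disp_t) (T : finOrderType d) (s : {perm T}) t :
  s t <= t -> flen s t = 1%N.
Proof.
move=> h; have : (0 < #|T|)%N by apply/card_gt0P; exists t.
rewrite /flen; case: #|T| => [//|n] _ /=.
by rewrite expg1 h.
Qed.

Lemma seg (d : Order.disp_t) (T : finOrderType d) (w : {perm T}) t u :
  t \in Uset w -> u \in rho w t ->
  [/\ lambda w t < t, t <= u, (w ^+ lambda_len w t)%g (lambda w t) = t,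
      (0 < lambda_len w t)%N &
      exists2 P, (lambda_len w t <= P)%N /\ (w ^+ P)%g (lambda w t) = u &
        forall p, (0 < p)%N -> (p <= P)%N -> t <= (w ^+ p)%g (lambda w t)].
Proof.
move=> tU /rhoP [i hi ->].
set m := lambda_len w t.
have hm : (0 < m)%N by have [] := flen_spec (w^-1)%g t.
have ha : (w ^+ m)%g (lambda w t) = t by rewrite /lambda expgVn permKV.
have alt : lambda w t < t.
  apply: U_strict; move: tU; rewrite inE => /existsP [x /andP [hx xt]].
  by exists x; rewrite // porbitV.
have tle : forall j, (j < rho_len w t)%N -> t <= (w ^+ j)%g t.
  move=> j hj; case: j hj => [|j] hj; first by rewrite expg0 perm1.
  by rewrite ltW // flen_lt.
split => //; first exact: tle.
exists (m + i)%N; first by rewrite leq_addr expgD permM ha.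
move=> p p0 pP.
case: (ltnP p m) => hpm.
  have -> : (w ^+ p)%g (lambda w t) = ((w^-1) ^+ (m - p))%g t.
    rewrite /lambda -/m.
    have -> : m = ((m - p) + p)%N by rewrite subnK // ltnW.
    by rewrite expgD permM expgVn permKV addnK.
  by rewrite ltW // flen_lt // ?subn_gt0 // ltn_subrL p0.
have -> : p = (m + (p - m))%N by rewrite subnKC.
rewrite expgD permM ha; apply: tle.
by apply: leq_ltn_trans hi; rewrite leq_subLR.
Qed.

Lemma seg_unique (d : Order.disp_t) (T : finOrderType d) (w : {perm T}) a u t m P t' m' P' :
  a < t -> (0 < m)%N -> (m <= P)%N -> (w ^+ m)%g a = t -> (w ^+ P)%g a = u ->
  (forall p, (0 < p)%N -> (p <= P)%N -> t <= (w ^+ p)%g a) ->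
  a < t' -> (0 < m')%N -> (m' <= P')%N -> (w ^+ m')%g a = t' -> (w ^+ P')%g a = u ->
  (forall p, (0 < p)%N -> (p <= P')%N -> t' <= (w ^+ p)%g a) -> t = t'.
Proof.
move=> hat m0 mP hm hP hseg hat' m0' mP' hm' hP' hseg'.
have key : forall tt PP QQ, a < tt -> (PP < QQ)%N -> (w ^+ PP)%g a = u -> (w ^+ QQ)%g a = u ->
   (forall p, (0 < p)%N -> (p <= QQ)%N -> tt <= (w ^+ p)%g a) -> False.
  move=> tt PP QQ att hPQ hPP hQQ hs.
  have hq : (w ^+ (QQ - PP))%g u = u by rewrite -{1}hPP -permM -expgD subnKC ?hQQ // ltnW.
  have : tt <= a.
    apply: (@periodic_bound d T w u (QQ - PP)%N) => //; first by rewrite subn_gt0.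
      move=> i i0 iq; rewrite -hPP -permM -expgD; apply: hs; first by rewrite addn_gt0 i0 orbT.
      by rewrite -(subnKC (ltnW hPQ)) leq_add2l.
    by rewrite porbit_sym -hPP mem_porbit.
  by rewrite leNgt att.
case: (leqP m P') => h1; case: (leqP m' P) => h2.
- apply/eqP; rewrite eq_le; apply/andP; split.
    by rewrite -hm' hseg.
  by rewrite -hm hseg'.
- by case: (key t' P P' hat' (leq_trans h2 mP') hP hP' hseg').
- by case: (key t P' P hat (leq_trans h1 mP) hP' hP hseg).
- by case: (key t P' P hat (leq_trans h1 mP) hP' hP hseg).
Qed.

Lemma min_case (d : Order.disp_t) (T : finOrderType d) (w : {perm T}) t :
  derangement w -> t \notin Uset w ->
  [/\ w t \in Uset w, lambda w (w t) = t, lambda w t = t & {subset rho w (w t) <= rho w t}].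
Proof.
move=> der tU.
have hmin := notU_min tU.
have twt : t < w t.
  rewrite lt_neqAle hmin ?andbT; first by rewrite eq_sym der.
  by have := mem_porbit w 1 t; rewrite expg1.
split.
- rewrite inE; apply/existsP; exists t; rewrite twt andbT.
  by rewrite porbit_sym; have := mem_porbit w 1 t; rewrite expg1.
- rewrite /lambda (_ : lambda_len w (w t) = 1%N) ?expg1 ?permK //.
  by apply: flen1; rewrite permK ltW.
- rewrite /lambda; apply/eqP; rewrite eq_le.
  have [_ [_ ->]] := flen_spec (w^-1)%g t.
  by rewrite hmin // -porbitV mem_porbit.
- have hlt : (flen w (w t) < flen w t)%N.
    rewrite ltnNge; apply/negP => hle.
    have [h0 [_ hs]] := flen_spec w t.
    move: hs hle; case: (flen w t) h0 => [//|k] _.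
    rewrite expgS permM => hs hle.
    case: k hs hle => [|k] hs hle.
      by move: hs; rewrite expg0 perm1 leNgt twt.
    have h := @flen_lt d T w (w t) k.+1 isT hle.
    by move: hs; rewrite leNgt (lt_trans twt h).
  move=> u /rhoP [i hi ->]; apply/rhoP; exists i.+1.
    by apply: leq_ltn_trans hlt.
  by rewrite expgS permM.
Qed.
Definition Aset (I : eqType) (X : finType) (S : I -> {set X}) (ts : seq I) (B : {set X}) :=
  [set E : {set X} | (E \subset B) && all (fun t => E :&: S t != set0) ts].

Lemma split_inj (X : finType) (S B : {set X}) (F G : {set X}) :
  F \subset S -> G \subset B :\: S -> F = (F :|: G) :&: S /\ G = (F :|: G) :\: S.
Proof.
move=> /subsetP hF /subsetP hG.
have hG' x : x \in G -> x \notin S by move/hG; rewrite inE => /andP [].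
split; apply/setP => x; rewrite !inE; case hx: (x \in F); case hg: (x \in G);
  case hs: (x \in S) => //=.
all: first [by have := hF x hx; rewrite hs | by have := hG' x hg; rewrite hs].
Qed.

Lemma count_gen (I : eqType) (X : finType) (S : I -> {set X}) (ts : seq I) (B : {set X}) :
  uniq ts -> (forall t, t \in ts -> S t \subset B) ->
  (forall t t', t \in ts -> t' \in ts -> t != t' -> [disjoint S t & S t']) ->
  (#|Aset S ts B| * 2 ^ (\sum_(t <- ts) #|S t|) = 2 ^ #|B| * \prod_(t <- ts) (2 ^ #|S t| - 1))%N.
Proof.
elim: ts B => [|t ts IH] B.
  move=> _ _ _; rewrite big_nil big_nil expn0 !muln1.
  rewrite (_ : Aset S [::] B = powerset B) ?card_powerset //.
  by apply/setP => E; rewrite !inE andbT.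
rewrite cons_uniq => /andP [tn un] hsub hdis.
set B' := B :\: S t.
have hsub' : forall t', t' \in ts -> S t' \subset B'.
  move=> t' ht'; rewrite subsetD hsub ?inE ?ht' ?orbT //= disjoint_sym hdis ?inE ?ht' ?eqxx ?orbT //.
  by apply: contraNneq tn => ->.
have hdis' : forall t1 t2, t1 \in ts -> t2 \in ts -> t1 != t2 -> [disjoint S t1 & S t2].
  by move=> t1 t2 h1 h2; apply: hdis; rewrite inE ?h1 ?h2 orbT.
have IH' := IH B' un hsub' hdis'.
have hSB : S t \subset B by apply: hsub; rewrite inE eqxx.
have key : Aset S (t :: ts) B =
   [set x.1 :|: x.2 | x in setX (powerset (S t) :\ set0) (Aset S ts B')].
  apply/setP => E; apply/idP/imsetP.
    rewrite inE /= => /and3P [EB EtS Eall].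
    exists (E :&: S t, E :\: S t); last by rewrite /= setID.
    rewrite inE /= !inE EtS subsetIr /= setSD //=.
    apply/allP => t' ht'; move/allP: Eall => /(_ t' ht') /set0Pn [x].
    rewrite inE => /andP [xE xS]; apply/set0Pn; exists x.
    rewrite !inE xE xS !andbT.
    have : x \in B' by move/subsetP: (hsub' t' ht'); apply.
    by rewrite inE => /andP [].
  move=> [[F G]]; rewrite !inE /= => /andP [/andP [Fn FS] /andP [GB Gall]] ->.
  apply/and3P; split.
  - rewrite subUset (subset_trans FS hSB) /=.
    by apply: subset_trans GB _; apply: subsetDl.
  - move/set0Pn: Fn => [x xF]; apply/set0Pn; exists x.
    by rewrite !inE xF /=; move/subsetP: FS; apply.
  - apply/allP => t' ht'; move/allP: Gall => /(_ t' ht') /set0Pn [x].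
    by rewrite !inE => /andP [xG xS]; apply/set0Pn; exists x; rewrite !inE xG xS orbT.
have cardkey : #|Aset S (t :: ts) B| = ((2 ^ #|S t| - 1) * #|Aset S ts B'|)%N.
  rewrite key card_in_imset; last first.
    move=> [F G] [F' G']; rewrite !inE /= => /andP [/andP [_ FS] /andP [GB _]].
    move=> /andP [/andP [_ FS'] /andP [GB' _]] /= he.
    have [h1 h2] := split_inj FS GB; have [h1' h2'] := split_inj FS' GB'.
    congr pair; first by rewrite h1 h1' he.
    by rewrite h2 h2' he.
  rewrite cardsX; congr (_ * _)%N.
  have := cardsD1 set0 (powerset (S t)).
  by rewrite powersetE sub0set card_powerset add1n => ->; rewrite subn1.
have hB : #|B| = (#|B'| + #|S t|)%N.
  by rewrite /B' cardsD (setIidPr hSB) subnK // subset_leq_card.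
rewrite cardkey big_cons big_cons expnD hB expnD.
move: IH'; set c := #|_|; set p := \prod_(_ <- _) _; set sm := 2 ^ (\sum_(_ <- _) _).
move=> IH'.
rewrite -mulnA (mulnCA c) IH'.
by rewrite !mulnA; congr (_ * _)%N; rewrite mulnC (mulnC (2 ^ #|S t| - 1)) mulnA.
Qed.

Definition Sset (d : Order.disp_t) (T : finOrderType d) (w : {perm T}) (t : T) : {set {set T}} :=
  [set [set lambda w t; u] | u in rho w t].

Lemma U_case (d : Order.disp_t) (T : finOrderType d) (w : {perm T}) E t :
  t \in Uset w ->
  [exists u in rho w t, adj E (lambda w t) u] = (E :&: Sset w t != set0).
Proof.
move=> tU; apply/existsP/set0Pn.
  move=> [u /andP [hu /andP [_ he]]]; exists [set lambda w t; u].
  by rewrite inE he /=; apply: imset_f.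
move=> [e]; rewrite inE => /andP [eE /imsetP [u hu ee]]; exists u.
have [hlt hle _ _ _] := seg tU hu.
by rewrite hu /adj -ee eE andbT (lt_eqF (lt_le_trans hlt hle)).
Qed.

Lemma inD_eq (d : Order.disp_t) (T : finOrderType d) (w : {perm T}) E :
  derangement w -> inD E w = all (fun t => E :&: Sset w t != set0) (enum (Uset w)).
Proof.
move=> der; apply/forallP/allP.
  by move=> h t; rewrite mem_enum => tU; rewrite -U_case //; apply: h.
move=> h t; case tU: (t \in Uset w).
  by rewrite U_case // h // mem_enum.
have [wU hl1 hl2 hsub] := min_case der (negbT tU).
have := h (w t); rewrite mem_enum wU -U_case // => /(_ isT) /existsP [u /andP [hu ha]].
by apply/existsP; exists u; rewrite hsub // hl2 -hl1.
Qed.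

Lemma S_props (d : Order.disp_t) (T : finOrderType d) (w : {perm T}) t :
  t \in Uset w -> #|Sset w t| = #|rho w t| /\ Sset w t \subset [set e : {set T} | #|e| == 2].
Proof.
move=> tU; split.
  apply: card_in_imset => u u' hu hu' he.
  have [hlt hle _ _ _] := seg tU hu; have [_ hle' _ _ _] := seg tU hu'.
  have : u \in [set lambda w t; u'] by rewrite -he set22.
  by rewrite in_set2 (gt_eqF (lt_le_trans hlt hle)) /= => /eqP.
apply/subsetP => e /imsetP [u hu ->]; rewrite inE cards2.
have [hlt hle _ _ _] := seg tU hu.
by rewrite (lt_eqF (lt_le_trans hlt hle)).
Qed.

Lemma pair_eq (d : Order.disp_t) (T : finOrderType d) (a u a' u' : T) :
  a < u -> a' < u' -> [set a; u] = [set a'; u'] -> a = a' /\ u = u'.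
Proof.
move=> h h' he.
have ha : a = a'.
  have : a \in [set a'; u'] by rewrite -he set21.
  have : a' \in [set a; u] by rewrite he set21.
  rewrite !in_set2 => /orP [/eqP -> //|/eqP e1] /orP [/eqP -> //|/eqP e2].
  by move: h h'; rewrite e1 -e2 => h h'; have := lt_trans h h'; rewrite ltxx.
split => //.
have : u \in [set a'; u'] by rewrite -he set22.
by rewrite in_set2 -ha (gt_eqF h) /= => /eqP.
Qed.

Lemma S_dis (d : Order.disp_t) (T : finOrderType d) (w : {perm T}) t t' :
  t \in Uset w -> t' \in Uset w -> t != t' -> [disjoint Sset w t & Sset w t'].
Proof.
move=> tU tU' ne; rewrite -setI_eq0; apply/eqP/setP => e; rewrite !inE.
apply/negP => /andP [/imsetP [u hu ->] /imsetP [u' hu' he]].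
have [hlt hle hm hm0 [P [hmP hP] hs]] := seg tU hu.
have [hlt' hle' hm' hm0' [P' [hmP' hP'] hs']] := seg tU' hu'.
have [ha hu2] := pair_eq (lt_le_trans hlt hle) (lt_le_trans hlt' hle') he.
rewrite -ha in hm' hP' hs' hlt'; rewrite -hu2 in hP'.
by move/eqP: ne; apply; apply: (seg_unique hlt hm0 hmP hm hP hs hlt' hm0' hmP' hm' hP' hs').
Qed.

Lemma freq_formula (d : Order.disp_t) (T : finOrderType d) (w : {perm T}) :
  derangement w ->
  (freq w * 2 ^ sumn (theta w) = 2 ^ 'C(#|T|, 2) * \prod_(x <- theta w) (2 ^ x - 1))%N.
Proof.
move=> der.
have -> : freq w = #|Aset (Sset w) (enum (Uset w)) [set e : {set T} | #|e| == 2]|.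
  apply: eq_card => E; rewrite !inE inD_eq //; congr andb.
  apply/forallP/subsetP => h e.
    by move=> he; rewrite inE; exact: (implyP (h e) he).
  by apply/implyP => he; have := h e he; rewrite inE.
have hp : perm_eq (theta w) [seq #|rho w t| | t <- enum (Uset w)] by rewrite /theta perm_sort.
have hsum : sumn (theta w) = \sum_(t <- enum (Uset w)) #|Sset w t|.
  rewrite (perm_sumn hp) sumnE big_map; apply: eq_big_seq => t; rewrite mem_enum => tU.
  by have [-> _] := S_props tU.
have hprod : \prod_(x <- theta w) (2 ^ x - 1) = \prod_(t <- enum (Uset w)) (2 ^ #|Sset w t| - 1).
  rewrite (perm_big _ hp) big_map; apply: eq_big_seq => t; rewrite mem_enum => tU.
  by have [-> _] := S_props tU.
rewrite hsum hprod count_gen ?enum_uniq ?card_draws //.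
  by move=> t; rewrite mem_enum => tU; have [_ ->] := S_props tU.
by move=> t t'; rewrite !mem_enum; apply: S_dis.
Qed.

Lemma arith (a b : seq nat) : all2 leq a b ->
  (\prod_(x <- a) (2 ^ x - 1) * 2 ^ sumn b <= \prod_(x <- b) (2 ^ x - 1) * 2 ^ sumn a)%N.
Proof.
elim: a b => [|x a IH] [|y b] //= /andP [hxy hab].
rewrite !big_cons !expnD.
have base : ((2 ^ x - 1) * 2 ^ y <= (2 ^ y - 1) * 2 ^ x)%N.
  rewrite !mulnBl !mul1n -!expnD addnC leq_sub2l // leq_pexp2l //.
have := leq_mul base (IH b hab).
by rewrite !mulnA; congr (_ <= _)%N; rewrite -!mulnA; congr (_ * _)%N;
  rewrite mulnCA; congr (_ * _)%N; rewrite mulnC.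
Qed.

Close Scope order_scope.

Theorem corollary3p8 (d : Order.disp_t) (T : finOrderType d) (k : nat)
  (w1 w2 : {perm T}) :
  derangement w1 -> derangement w2 ->
  #|porbits w1| = k -> #|porbits w2| = k ->
  tuple_le (theta w1) (theta w2) ->
  (freq w1 <= freq w2)%N /\ (rate w1 <= rate w2)%R.
Proof.
move=> der1 der2 _ _ hle.
have hf : (freq w1 <= freq w2)%N.
  have h1 := freq_formula der1; have h2 := freq_formula der2.
  have ha := arith hle.
  rewrite -(@leq_pmul2r (2 ^ sumn (theta w1) * 2 ^ sumn (theta w2))) ?muln_gt0 ?expn_gt0 //.
  rewrite mulnA h1 (mulnC (2 ^ sumn (theta w1))) mulnA h2 -!mulnA leq_pmul2l ?expn_gt0 //.
split => //.
rewrite /rate; apply: Num.Theory.ler_wpM2r.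
  by rewrite Num.Theory.invr_ge0 Num.Theory.ler0n.
by rewrite Num.Theory.ler_nat.
Qed.
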